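(* Let $v_{1,1},v_{2,1},w_{1,1},w_{2,1}\in\mathbb R$ satisfy $w_{i,1}>0$, $4v_{i,1}+w_{i,1}>0$ ($i=1,2$), $v_{1,1}v_{2,1}>0$ and $c_2>c_1$, where $c_i:=2v_{i,1}+w_{i,1}$. Then $\omega_-(\vartheta)+\omega_+(2\vartheta)\neq\omega_+(3\vartheta)$ for all $\vartheta\in(-\pi,\pi]$.
   Context: For $\vartheta\in\mathbb R$ define $$\omega_\pm(\vartheta):=\sqrt{\tfrac12\Big(c_1+c_2\pm\sqrt{(c_1-c_2)^2+8v_{1,1}v_{2,1}(\cos\vartheta+1)}\Big)},$$ which are well defined and positive under the stated assumptions. *)

(* Defs.v *)
From Stdlib Require Import Reals.
Open Scope R_scope.

Definition cc (v w : R) : R := 2 * v + w.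

Definition omega_plus (v11 v21 w11 w21 theta : R) : R :=
  let c1 := cc v11 w11 in let c2 := cc v21 w21 in
  sqrt ((1/2) * (c1 + c2 + sqrt ((c1 - c2)^2 + 8 * v11 * v21 * (cos theta + 1)))).

Definition omega_minus (v11 v21 w11 w21 theta : R) : R :=
  let c1 := cc v11 w11 in let c2 := cc v21 w21 in
  sqrt ((1/2) * (c1 + c2 - sqrt ((c1 - c2)^2 + 8 * v11 * v21 * (cos theta + 1)))).

(* Main.v *)
Require Import Defs.
From Stdlib Require Import Reals Lra Psatz.
Open Scope R_scope.

Lemma cos3 (t : R) : cos (3 * t) = 4 * (cos t)^3 - 3 * cos t.
Proof.
  replace (3 * t) with (2 * t + t) by ring.
  rewrite cos_plus, sin_2a, cos_2a_cos.
  pose proof (sin2 t). unfold Rsqr in H.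
  replace (2 * sin t * cos t * sin t) with (2 * cos t * (sin t * sin t)) by ring.
  rewrite H. ring.
Qed.

Lemma key (c1 c2 k t x y z S1 S2 S3 : R)
  (hc1 : 0 < c1) (hc2 : c1 < c2) (hk : 0 < k) (hP : 2 * k < 4 * c1 * c2)
  (ht1 : -1 <= t) (ht2 : t <= 1)
  (hS1 : 0 <= S1) (hS2 : 0 <= S2) (hS3 : 0 <= S3)
  (eS1 : S1 * S1 = (c2 - c1)^2 + k * (t + 1))
  (eS2 : S2 * S2 = (c2 - c1)^2 + k * (2 * t^2))
  (eS3 : S3 * S3 = (c2 - c1)^2 + k * (4 * t^3 - 3 * t + 1))
  (hx : 0 <= x) (hy : 0 <= y) (hz : 0 <= z)
  (ex : x * x = (1/2) * (c1 + c2 - S1))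
  (ey : y * y = (1/2) * (c1 + c2 + S2))
  (ez : z * z = (1/2) * (c1 + c2 + S3)) :
  x + y <> z.
Proof.
  intro E.
  set (a := c1 + c2) in *.
  set (u1 := t + 1) in *. set (u2 := 2 * t^2) in *. set (u3 := 4 * t^3 - 3 * t + 1) in *.
  assert (hu1 : 0 <= u1 <= 2) by (unfold u1; lra).
  assert (hu2 : 0 <= u2) by (unfold u2; nra).
  assert (hS1a : S1 < a).
  { assert (S1 * S1 < a * a) by (unfold a; nra). nra. }
  assert (hx0 : 0 < x).
  { assert (0 < x * x) by lra. destruct hx as [h|h]; [lra|]. subst. nra. }
  destruct (Rle_or_lt S3 S2) as [H|H].
  - assert (z * z <= y * y) by lra.
    assert (z <= y) by nra. lra.
  - assert (hu : u2 < u3).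
    { assert (S2 * S2 < S3 * S3) by nra.
      assert (0 < k * (u3 - u2)) by lra.
      destruct (Rle_or_lt u3 u2); [|lra]. nra. }
    assert (hyc : c2 <= y * y).
    { assert ((c2 - c1) <= S2) by nra. unfold a in ey. lra. }
    assert (y * y <= z * z) by lra.
    assert (hzy : y <= z) by nra.
    assert (Hxz : x * (z + y) = (S3 - S2) / 2).
    { replace x with (z - y) by lra.
      transitivity (z * z - y * y); [ring|lra]. }
    assert (H1 : x * (2 * y) <= (S3 - S2) / 2) by nra.
    assert (H1' : 0 <= x * (2 * y)) by nra.
    assert (H2a : (x * (2 * y)) * (x * (2 * y)) <= ((S3 - S2) / 2) * ((S3 - S2) / 2)).
    { apply Rmult_le_compat; lra. }
    assert (H2 : 16 * (x * x) * (y * y) <= (S3 - S2) * (S3 + S2)) by nra.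
    assert (H3 : 16 * (x * x) * c2 <= k * (u3 - u2)) by nra.
    assert (H4 : 8 * c2 * (a - S1) <= k * (u3 - u2)) by nra.
    assert (H5 : (a - S1) * (a + S1) = 4 * c1 * c2 - k * u1).
    { unfold a. nra. }
    assert (H6 : 8 * c2 * (4 * c1 * c2 - k * u1) <= k * (u3 - u2) * (a + S1)) by nra.
    assert (H7 : k * (u3 - u2) * (a + S1) < k * (u3 - u2) * (4 * c2)).
    { apply Rmult_lt_compat_l. nra. assert (a = c1 + c2) by reflexivity. lra. }
    assert (H8 : 2 * (4 * c1 * c2 - k * u1) < k * (u3 - u2)) by nra.
    assert (H9 : 2 * u1 + u3 - u2 <= 4).
    { unfold u1, u2, u3.
      assert (0 <= (1 - t) * (4 * t * t + 2 * t + 1)) by (apply Rmult_le_pos; nra). nra. }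
    nra.
Qed.

Theorem mainTheorem4 (v11 v21 w11 w21 : R)
  (hw1 : 0 < w11) (hw2 : 0 < w21)
  (h41 : 0 < 4 * v11 + w11) (h42 : 0 < 4 * v21 + w21)
  (hvv : 0 < v11 * v21)
  (hc : cc v21 w21 > cc v11 w11) :
  forall theta : R, -PI < theta <= PI ->
    omega_minus v11 v21 w11 w21 theta + omega_plus v11 v21 w11 w21 (2 * theta)
      <> omega_plus v11 v21 w11 w21 (3 * theta).
Proof.
  intros theta _.
  unfold omega_minus, omega_plus, cc in *.
  set (c1 := 2 * v11 + w11) in *. set (c2 := 2 * v21 + w21) in *.
  assert (hc1 : 0 < c1).
  { unfold c1. destruct (Rle_or_lt 0 v11); [lra|]. nra. }
  assert (hP : 2 * (8 * v11 * v21) < 4 * c1 * c2).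
  { unfold c1, c2. destruct (Rle_or_lt 0 v11).
    - assert (0 < v11) by (destruct H; [lra| subst; lra]).
      assert (0 < v21) by nra. nra.
    - assert (v21 < 0) by nra. nra. }
  rewrite cos_2a_cos, cos3.
  set (t := cos theta).
  assert (ht := COS_bound theta). fold t in ht.
  set (k := 8 * v11 * v21) in *.
  assert (hk : 0 < k) by (unfold k; lra).
  assert (E1 : 8 * v11 * v21 * (t + 1) = k * (t + 1)) by reflexivity.
  assert (ha1 : 0 <= (c1 - c2)^2 + k * (t + 1)) by nra.
  assert (ha2 : 0 <= (c1 - c2)^2 + k * (2 * t * t - 1 + 1)) by nra.
  assert (ha3 : 0 <= (c1 - c2)^2 + k * (4 * t^3 - 3 * t + 1)).
  { assert (4 * t^3 - 3 * t + 1 = (t + 1) * (2 * t - 1)^2) by ring. rewrite H.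
    assert (0 <= (c1 - c2)^2) by (apply pow2_ge_0).
    assert (0 <= (2 * t - 1)^2) by (apply pow2_ge_0).
    assert (0 <= (t + 1) * (2 * t - 1)^2) by (apply Rmult_le_pos; lra).
    nra. }
  set (S1 := sqrt ((c1 - c2)^2 + k * (t + 1))).
  set (S2 := sqrt ((c1 - c2)^2 + k * (2 * t * t - 1 + 1))).
  set (S3 := sqrt ((c1 - c2)^2 + k * (4 * t^3 - 3 * t + 1))).
  assert (eS1 := sqrt_sqrt _ ha1). fold S1 in eS1.
  assert (eS2 := sqrt_sqrt _ ha2). fold S2 in eS2.
  assert (eS3 := sqrt_sqrt _ ha3). fold S3 in eS3.
  assert (pS1 := sqrt_pos ((c1 - c2)^2 + k * (t + 1))). fold S1 in pS1.
  assert (pS2 := sqrt_pos ((c1 - c2)^2 + k * (2 * t * t - 1 + 1))). fold S2 in pS2.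
  assert (pS3 := sqrt_pos ((c1 - c2)^2 + k * (4 * t^3 - 3 * t + 1))). fold S3 in pS3.
  assert (hS1a : S1 < c1 + c2).
  { assert (S1 * S1 < (c1 + c2) * (c1 + c2)) by nra. nra. }
  assert (hc12 : c1 < c2) by lra.
  apply (key c1 c2 k t _ _ _ S1 S2 S3); try assumption; try apply sqrt_pos.
  - lra.
  - lra.
  - rewrite eS1. ring.
  - rewrite eS2. ring.
  - rewrite eS3. ring.
  - apply sqrt_sqrt. lra.
  - apply sqrt_sqrt. lra.
  - apply sqrt_sqrt. lra.
Qed.
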